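(* Let $A,B\subseteq\mathcal{R}$ be outer measurable with $M_u(B)=0$. Then every subset $C\subseteq B$ is outer measurable with $M_u(C)=0$, and $A\setminus C$ is outer measurable with $M_u(A\setminus C)=M_u(A)$.
   Context: $\mathcal{R}$ denotes the Levi-Civita field: functions $x:\mathbb{Q}\to\mathbb{R}$ with left-finite support, with componentwise addition and formal power series multiplication, ordered by $x>0$ iff $x\ne0$ and $x[\min\operatorname{supp}x]>0$; it is a non-Archimedean ordered field extension of $\mathbb{R}$, Cauchy complete in the order topology, in which all limits and series are taken (a series $\sum a_n$ converges iff $a_n\to0$). An interval is a set $[a,b],[a,b),(a,b]$ or $(a,b)$ with $a<b$ in $\mathcal{R}$, of length $l=b-a$. A cover of $A\subseteq\mathcal{R}$ is a sequence of intervals $(S_n)_{n\ge1}$ with $A\subseteq\bigcup_n S_n$ and $\sum_n l(S_n)$ convergent in $\mathcal{R}$. $A$ is called outer measurable if the infimum $\inf\{\sum_n l(S_n): (S_n)\text{ a cover of }A\}$ exists in $\mathcal{R}$; this infimum is then called the outer measure $M_u(A)$. *)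

(* Defs.v *)
(* The Levi-Civita field is built concretely as a type of
   functions rat -> R (Stdlib reals, seen as a realType via Rstruct) with
   left-finite support. *)
From HB Require Import structures.
From mathcomp Require Import all_boot all_order all_algebra.
From mathcomp Require Import boolp classical_sets cardinality Rstruct.

Set Implicit Arguments. Unset Strict Implicit. Unset Printing Implicit Defensive.
Import Order.TTheory GRing.Theory Num.Theory.
Local Open Scope ring_scope.
Local Open Scope classical_set_scope.

Definition left_finite (x : rat -> Rdefinitions.R) : Prop :=
  forall q : rat, finite_set [set a : rat | a < q /\ x a != 0].

Record LC := MkLC { lc_fun :> rat -> Rdefinitions.R ; lc_lf : left_finite lc_fun }.

Lemma left_finite0 : left_finite (fun _ => 0).
Proof.
move=> q; apply: (sub_finite_set _ (finite_set0 rat)) => a /= [_]; by rewrite eqxx.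
Qed.

Lemma left_finiteD (x y : LC) : left_finite (fun q => x q + y q).
Proof.
move=> q.
apply: (@sub_finite_set _ _ ([set a | a < q /\ x a != 0] `|` [set a | a < q /\ y a != 0])).
  move=> a /= [aq]; case: (eqVneq (x a) 0) => [->|xa _]; last by left.
  by rewrite add0r => ya; right.
by rewrite finite_setU; split; apply: lc_lf.
Qed.

Lemma left_finiteN (x : LC) : left_finite (fun q => - x q).
Proof.
move=> q; apply: (sub_finite_set _ (lc_lf x q)) => a /= [aq].
by rewrite oppr_eq0 => ?; split.
Qed.

Definition lc0 : LC := MkLC left_finite0.
Definition lc_add (x y : LC) : LC := MkLC (left_finiteD x y).
Definition lc_opp (x : LC) : LC := MkLC (left_finiteN x).
Definition lc_sub (x y : LC) : LC := lc_add x (lc_opp y).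

(** x > 0 iff x <> 0 and x[min supp x] > 0, i.e. there is q with x q > 0 and
    x a = 0 for all a < q (then q = min supp x). *)
Definition lc_pos (x : LC) : Prop :=
  exists q : rat, 0 < x q /\ forall a : rat, a < q -> x a = 0.

Definition lc_lt (x y : LC) : Prop := lc_pos (lc_sub y x).
Definition lc_le (x y : LC) : Prop := x = y \/ lc_lt x y.

(** convergence in the order topology: every open interval (a,b) containing L
    eventually contains u n *)
Definition lc_cvg (u : nat -> LC) (L : LC) : Prop :=
  forall a b : LC, lc_lt a L -> lc_lt L b ->
    exists N : nat, forall n : nat, (N <= n)%N -> lc_lt a (u n) /\ lc_lt (u n) b.

Fixpoint lc_partial (u : nat -> LC) (n : nat) : LC :=
  match n with 0 => lc0 | m.+1 => lc_add (lc_partial u m) (u m) end.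

Definition lc_series_to (u : nat -> LC) (s : LC) : Prop := lc_cvg (lc_partial u) s.

Inductive ikind := CC | CO | OC | OO.

Definition in_interval (k : ikind) (a b x : LC) : Prop :=
  match k with
  | CC => lc_le a x /\ lc_le x b
  | CO => lc_le a x /\ lc_lt x b
  | OC => lc_lt a x /\ lc_le x b
  | OO => lc_lt a x /\ lc_lt x b
  end.

Definition cover_with_sum (A : set LC) (k : nat -> ikind) (a b : nat -> LC)
    (s : LC) : Prop :=
  (forall n, lc_lt (a n) (b n)) /\
  (forall x, A x -> exists n, in_interval (k n) (a n) (b n) x) /\
  lc_series_to (fun n => lc_sub (b n) (a n)) s.

Definition cover_sums (A : set LC) : set LC :=
  [set s | exists k a b, cover_with_sum A k a b s].

(** m is the infimum of the total lengths of covers of A, i.e. M_u(A) = m *)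
Definition is_outer_measure (A : set LC) (m : LC) : Prop :=
  (forall s, cover_sums A s -> lc_le m s) /\
  (forall l, (forall s, cover_sums A s -> lc_le l s) -> lc_le l m).

Definition outer_measurable (A : set LC) : Prop := exists m, is_outer_measure A m.

(* Main.v *)
Require Import Defs.
From HB Require Import structures.
From mathcomp Require Import all_boot all_order all_algebra.
From mathcomp Require Import boolp classical_sets cardinality Rstruct.
From mathcomp Require Import ring lra.
Import Order.TTheory GRing.Theory Num.Theory.
Set Implicit Arguments. Unset Strict Implicit.
Local Open Scope ring_scope.
Local Open Scope classical_set_scope.

Notation RR := Rdefinitions.R.
Definition Pf (f : rat -> RR) := exists q : rat, 0 < f q /\ forall a : rat, a < q -> f a = 0.
Definition Nf (f : rat -> RR) := (forall q, f q = 0) \/ Pf f.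

Lemma Pf_ext f g : (forall q, f q = g q) -> Pf f -> Pf g.
Proof. by move=> e [q [h1 h2]]; exists q; split; rewrite -?e // => a /h2; rewrite e. Qed.

Lemma Nf_ext f g : (forall q, f q = g q) -> Nf f -> Nf g.
Proof. move=> e [h|h]; [left=> q; rewrite -e //| right; exact: Pf_ext h]. Qed.

Lemma Pf_add f g : Pf f -> Pf g -> Pf (fun q => f q + g q).
Proof.
move=> [q1 [p1 z1]] [q2 [p2 z2]].
case: (ltgtP q1 q2) => h.
- exists q1; split; first by rewrite (z2 _ h) addr0.
  by move=> a ha; rewrite z1 // z2 ?addr0 //; exact: lt_trans ha h.
- exists q2; split; first by rewrite (z1 _ h) add0r.
  by move=> a ha; rewrite z1 ?z2 ?addr0 //; exact: lt_trans ha h.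
- subst q2; exists q1; split; first exact: addr_gt0.
  by move=> a ha; rewrite z1 // z2 // addr0.
Qed.

Lemma NP_add f g : Nf f -> Pf g -> Pf (fun q => f q + g q).
Proof.
move=> [h|h] hg; last exact: Pf_add.
by apply: (Pf_ext _ hg) => q; rewrite h add0r.
Qed.

Lemma PN_add f g : Pf f -> Nf g -> Pf (fun q => f q + g q).
Proof. move=> hf hg; apply: (Pf_ext _ (NP_add hg hf)) => q; exact: addrC. Qed.

Lemma Pf_Nf f : Pf f -> Nf f. Proof. by right. Qed.

Lemma Nf_add f g : Nf f -> Nf g -> Nf (fun q => f q + g q).
Proof.
move=> [h|h] hg.
  by apply: (Nf_ext _ hg) => q; rewrite h add0r.
by right; exact: PN_add.
Qed.

Lemma Pf_neg f : Pf f -> Pf (fun q => - f q) -> False.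
Proof.
move=> [q1 [p1 z1]] [q2 [p2 z2]].
case: (ltgtP q1 q2) => h.
- by move: (z2 _ h) => /eqP; rewrite oppr_eq0 => /eqP e; move: p1; rewrite e ltxx.
- by move: (z1 _ h) p2 => ->; rewrite oppr0 ltxx.
- subst; lra.
Qed.

Lemma Pf_0 f : Pf f -> (forall q, f q = 0) -> False.
Proof. by move=> [q [p _]] h; move: p; rewrite h ltxx. Qed.

Lemma PN_contra f g : Pf f -> Nf g -> (forall q, g q = - f q) -> False.
Proof.
move=> hf [h|h] e.
  apply: (Pf_0 hf) => q; move: (h q); rewrite e => /eqP; rewrite oppr_eq0 => /eqP //.
by apply: (Pf_neg hf); apply: (Pf_ext _ h).
Qed.

Lemma seq_min (s : seq rat) x : x \in s -> exists m, m \in s /\ forall a, a \in s -> m <= a.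
Proof.
elim: s x => // y s IH x; rewrite inE => /orP [/eqP _|xs].
  case: (pselect (exists z, z \in s)) => [[z zs]|ns].
    have [m [ms hm]] := IH _ zs.
    case: (leP y m) => h.
      exists y; split; first by rewrite inE eqxx.
      by move=> a; rewrite inE => /orP [/eqP ->|/hm]; [|apply: le_trans].
    exists m; split; first by rewrite inE ms orbT.
    by move=> a; rewrite inE => /orP [/eqP ->|/hm]; [exact: ltW|].
  exists y; split; first by rewrite inE eqxx.
  move=> a; rewrite inE => /orP [/eqP ->//|as']; by exfalso; apply: ns; exists a.
have [m [ms hm]] := IH _ xs.
case: (leP y m) => h.
  exists y; split; first by rewrite inE eqxx.
  by move=> a; rewrite inE => /orP [/eqP ->|/hm]; [|apply: le_trans].
exists m; split; first by rewrite inE ms orbT.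
by move=> a; rewrite inE => /orP [/eqP ->|/hm]; [exact: ltW|].
Qed.

Lemma trich f : left_finite f -> (forall q, f q = 0) \/ Pf f \/ Pf (fun q => - f q).
Proof.
move=> lf.
case: (pselect (exists q0, f q0 != 0)) => [[q0 h0]|nz]; last first.
  left=> q; apply/eqP; apply: contrapT => h; apply: nz; exists q; exact/negP.
have := lf (q0 + 1); move/finite_seqP => [s es].
have q0s : q0 \in s.
  have : [set a | a < q0 + 1 /\ f a != 0] q0 by split => //; rewrite ltrDl.
  by rewrite es.
have [m [ms hm]] := seq_min q0s.
have : [set` s] m by [].
rewrite -es => -[mlt fm].
have zb : forall a, a < m -> f a = 0.
  move=> a am; apply/eqP; apply: contrapT => /negP fa.
  have : [set a | a < q0 + 1 /\ f a != 0] a.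
    split => //; apply: lt_trans am mlt.
  rewrite es /= => /hm; rewrite leNgt am //.
right; case: (ltgtP 0 (f m)) => h.
- by left; exists m.
- by right; exists m; split; [rewrite oppr_gt0| move=> a /zb ->; rewrite oppr0].
- by move: fm; rewrite -h eqxx.
Qed.

Lemma lc_eq (x y : LC) : (forall q, x q = y q) -> x = y.
Proof.
case: x y => f hf [g hg] /= e.
have efg : f = g by apply: funext.
subst g; congr MkLC; exact: Prop_irrelevance.
Qed.

Lemma le_N (x y : LC) : lc_le x y -> Nf (fun q => y q - x q).
Proof. by move=> [->|h]; [left=> q; rewrite subrr | right]. Qed.

Lemma N_le (x y : LC) : Nf (fun q => y q - x q) -> lc_le x y.
Proof.
move=> [h|h]; [left; apply: lc_eq => q; apply/eqP; rewrite eq_sym -subr_eq0; apply/eqP/h | by right].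
Qed.

Lemma lc_total (x y : LC) : lc_lt x y \/ x = y \/ lc_lt y x.
Proof.
have := trich (lc_lf (lc_sub y x)); move=> [h|[h|h]].
- right; left; apply: lc_eq => q; move: (h q) => /= /eqP; rewrite subr_eq0 => /eqP ->//.
- by left.
- by right; right; apply: (Pf_ext _ h) => q /=; rewrite opprD opprK addrC.
Qed.

Lemma lt_Pf (x y : LC) : lc_lt x y -> Pf (fun q => y q - x q).
Proof. by []. Qed.

Lemma partial_mono (u : nat -> LC) : (forall n, Pf (u n)) ->
  forall i d, Nf (fun q => lc_partial u (i + d) q - lc_partial u i q).
Proof.
move=> hu i; elim=> [|d IH]; first by left=> q; rewrite addn0 subrr.
rewrite addnS; apply: Pf_Nf; apply: (Pf_ext _ (NP_add IH (hu (i + d)))) => q /=.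
ring.
Qed.

Lemma partial_mono' (u : nat -> LC) : (forall n, Pf (u n)) ->
  forall i j, (i <= j)%N -> Nf (fun q => lc_partial u j q - lc_partial u i q).
Proof. by move=> hu i j ij; rewrite -(subnKC ij); exact: partial_mono. Qed.

Lemma cvg_lower (u : nat -> LC) L a : lc_cvg u L -> lc_lt a L ->
  exists N, forall n, (N <= n)%N -> lc_lt a (u n).
Proof.
move=> hc ha.
have hb : lc_lt L (lc_add L (lc_sub L a)).
  apply: (Pf_ext _ ha) => q /=; ring.
have [N hN] := hc _ _ ha hb.
by exists N => n /hN [].
Qed.

Lemma partial_le_lim (u : nat -> LC) s : (forall n, Pf (u n)) -> lc_series_to u s ->
  forall n, Nf (fun q => s q - lc_partial u n q).
Proof.
move=> hu hs n.
case: (lc_total (lc_partial u n) s) => [h|[h|h]].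
- by right.
- by left=> q; rewrite h subrr.
- exfalso.
  pose d := lc_sub (lc_partial u n) s.
  have ha : lc_lt (lc_sub s d) s by apply: (Pf_ext _ h) => q /=; ring.
  have [N hN] := hs _ _ ha h.
  have [_ h2] := hN (n + N)%N (leq_addl _ _).
  apply: (PN_contra h2 (partial_mono hu n N)) => q /=; ring.
Qed.

Lemma interleave_partial (u v w : nat -> LC) :
  (forall n, w n.*2 = u n) -> (forall n, w n.*2.+1 = v n) ->
  forall n q, lc_partial w n.*2 q = lc_partial u n q + lc_partial v n q /\
              lc_partial w n.*2.+1 q = lc_partial u n.+1 q + lc_partial v n q.
Proof.
move=> he ho; elim=> [|n IH] q.
  by rewrite /= he /=; split; ring.
have [IH1 IH2] := IH q.
rewrite doubleS; split.
  by rewrite /= IH1 he ho /=; ring.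
by rewrite /= IH1 he ho -doubleS he /=; ring.
Qed.

Lemma interleave_cvg (u v w : nat -> LC) s t :
  (forall n, Pf (u n)) -> (forall n, Pf (v n)) ->
  (forall n, w n.*2 = u n) -> (forall n, w n.*2.+1 = v n) ->
  lc_series_to u s -> lc_series_to v t -> lc_series_to w (lc_add s t).
Proof.
move=> hu hv he ho hs ht a b ha hb.
have hip := interleave_partial he ho.
have dec : forall k, exists n, Nf (fun q => lc_partial w k q - (lc_partial u n q + lc_partial v n q))
    /\ Nf (fun q => (s q + t q) - lc_partial w k q) /\ (k <= n.*2.+1)%N.
  move=> k; exists k./2; have := odd_double_half k.
  move: k./2 => n; case: (odd k) => ek; rewrite -ek ?add1n ?add0n.
    split; [|split; last by []].
      apply: Pf_Nf; apply: (Pf_ext _ (hu n)) => q; rewrite (hip n q).2 /=; ring.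
    apply: (Nf_ext _ (Nf_add (partial_le_lim hu hs n.+1) (partial_le_lim hv ht n))).
    by move=> q; rewrite (hip _ q).2; ring.
  split; [|split; last by []].
    by left=> q; rewrite (hip _ q).1 subrr.
  apply: (Nf_ext _ (Nf_add (partial_le_lim hu hs n) (partial_le_lim hv ht n))).
  by move=> q; rewrite (hip _ q).1; ring.
have h1 : lc_lt (lc_sub a t) s by apply: (Pf_ext _ ha) => q /=; ring.
have [N1 hN1] := cvg_lower hs h1.
have h2 : lc_lt (lc_sub a (lc_partial u N1)) t.
  apply: (Pf_ext _ (hN1 N1 (leqnn _))) => q /=; ring.
have [N2 hN2] := cvg_lower ht h2.
have hPN := hN2 N2 (leqnn _).
exists (N1 + N2).*2.+2 => k hk.
have [n [d1 [d2 kn]]] := dec k.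
have Mn : (N1 + N2 <= n)%N.
  by have := leq_trans hk kn; rewrite ltnS ltn_double; exact: ltnW.
split.
- have m1 := partial_mono' hu (leq_trans (leq_addr N2 N1) Mn).
  have m2 := partial_mono' hv (leq_trans (leq_addl N1 N2) Mn).
  apply: (Pf_ext _ (NP_add d1 (NP_add (Nf_add m1 m2) hPN))) => q /=; ring.
- apply: (Pf_ext _ (NP_add d2 hb)) => q /=; ring.
Qed.

Theorem proposition3p2 (A B : set LC) (mA : LC) :
  is_outer_measure A mA -> is_outer_measure B lc0 ->
  forall C : set LC, C `<=` B ->
    (outer_measurable C /\ is_outer_measure C lc0) /\
    (outer_measurable (A `\` C) /\ is_outer_measure (A `\` C) mA).
Proof.
move=> hA hB C CB.
have hC : is_outer_measure C lc0.
  split.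
  - move=> s [k [a [b [hpos [hcov hser]]]]].
    apply: N_le; exact: (partial_le_lim hpos hser 0).
  - move=> l hl; apply: hB.2 => s [k [a [b [hp [hc hs]]]]]; apply: hl.
    exists k, a, b; split=>//; split=>// x Cx; exact: hc _ (CB _ Cx).
split; first by split=>//; exists lc0.
have hAC : is_outer_measure (A `\` C) mA.
  split; last first.
    move=> l hl; apply: hA.2 => s [k [a [b [hp [hc hs]]]]]; apply: hl.
    by exists k, a, b; split=>//; split=>// x [Ax _]; exact: hc.
  move=> s [kA [aA [bA [hpA [hcA hsA]]]]].
  case: (lc_total mA s) => [h|[h|h]]; [by right | by left | exfalso].
  pose e := lc_sub mA s.
  have he : exists t, cover_sums B t /\ lc_lt t e.
    apply: contrapT => nt.
    have hl : forall t, cover_sums B t -> lc_le e t.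
      move=> t ht; case: (lc_total e t) => [h'|[h'|h']]; [by right|by left|].
      by exfalso; apply: nt; exists t.
    move: (le_N (hB.2 _ hl)) => hN.
    by apply: (PN_contra h hN) => q /=; ring.
  have [t [[kB [aB [bB [hpB [hcB hsB]]]]] ht]] := he.
  pose kk j := if odd j then kB j./2 else kA j./2.
  pose aa j := if odd j then aB j./2 else aA j./2.
  pose bb j := if odd j then bB j./2 else bA j./2.
  have cov : cover_sums A (lc_add s t).
    exists kk, aa, bb; split; [|split].
    - move=> j; rewrite /aa /bb; case: (odd j); [exact: hpB | exact: hpA].
    - move=> x Ax; case: (pselect (C x)) => Cx.
        have [n hn] := hcB _ (CB _ Cx); exists n.*2.+1.
        by rewrite /kk /aa /bb /= odd_double /= uphalf_double.
      have [n hn] := hcA x (conj Ax Cx); exists n.*2.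
      by rewrite /kk /aa /bb odd_double half_double.
    - apply: (@interleave_cvg (fun n => lc_sub (bA n) (aA n)) (fun n => lc_sub (bB n) (aB n)))
        => // n.
        by rewrite /aa /bb odd_double half_double.
      by rewrite /aa /bb /= odd_double /= uphalf_double.
  move: (le_N (hA.1 _ cov)) => hN.
  by apply: (PN_contra ht hN) => q /=; ring.
by split=>//; exists mA.
Qed.
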